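(* With $0<q<1$, $p=1-q$, $Q=1/q$, $L=\log Q$, let \[ c_2(q)=-\frac{p}{qL}\sum_{l\ge1}\frac{1}{Q^l-1}+\frac pq\sum_{l\ge1}\frac{lQ^l}{(Q^l-1)^2}+\frac1L-\frac1p-\frac qp. \] Then, as $q\to1^-$, \[ c_2(q)=\frac14+\frac19\log q+O(\log^2 q); \] in particular $c_2(q)\to\frac14$. *)

(* Defs.v *)
From Stdlib Require Import Reals.
From Coquelicot Require Import Coquelicot.
Open Scope R_scope.

(* c_2(q) with p = 1 - q, Q = 1/q, L = log Q.  Sums over l >= 1 are written
   as Coquelicot [Series] over n >= 0 with l = n + 1. *)
Definition c2 (q : R) : R :=
  let p := 1 - q in
  let Q := / q in
  let L := ln Q in
  - (p / (q * L)) * Series (fun n : nat => / (Q ^ (S n) - 1))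
  + (p / q) * Series (fun n : nat => INR (S n) * Q ^ (S n) / (Q ^ (S n) - 1) ^ 2)
  + / L - / p - q / p.

(* Main.v *)
From Stdlib Require Import Reals Lra Lia.
From Coquelicot Require Import Coquelicot.
Require Import Defs.
Open Scope R_scope.
Lemma is_derive_Rminus f g x df dg : is_derive f x df -> is_derive g x dg -> is_derive (fun y => f y - g y) x (df - dg).
Proof. intros. exact (is_derive_minus f g x df dg H H0). Qed.
Lemma is_derive_Rplus f g x df dg : is_derive f x df -> is_derive g x dg -> is_derive (fun y => f y + g y) x (df + dg).
Proof. intros. exact (is_derive_plus f g x df dg H H0). Qed.
Lemma is_derive_Ropp f x df : is_derive f x df -> is_derive (fun y => - f y) x (- df).
Proof. intros. exact (is_derive_opp f x df H). Qed.

Lemma cmp_deriv (u u' v v' : R -> R) (a b : R) :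
  a <= b ->
  (forall x, a <= x <= b -> is_derive u x (u' x)) ->
  (forall x, a <= x <= b -> is_derive v x (v' x)) ->
  (forall x, a <= x <= b -> u' x <= v' x) ->
  u b - u a <= v b - v a.
Proof.
  intros Hab Hu Hv Hle.
  destruct (Req_dec a b) as [->|Hne]; [lra|].
  assert (Hlt : a < b) by lra.
  destruct (MVT_gen (fun x => v x - u x) a b (fun x => v' x - u' x)) as [c [Hc Heq]].
  - intros x Hx. rewrite Rmin_left in Hx by lra. rewrite Rmax_right in Hx by lra.
    apply is_derive_Rminus; [apply Hv|apply Hu]; lra.
  - intros x Hx. rewrite Rmin_left in Hx by lra. rewrite Rmax_right in Hx by lra.
    apply continuity_pt_filterlim. apply (ex_derive_continuous (fun y => v y - u y) x).
    exists (v' x - u' x). apply is_derive_Rminus; [apply Hv|apply Hu]; lra.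
  - rewrite Rmin_left in Hc by lra. rewrite Rmax_right in Hc by lra.
    assert (H := Hle c Hc). nra.
Qed.

Lemma cmp_abs (u u' v v' : R -> R) (a b : R) :
  a <= b ->
  (forall x, a <= x <= b -> is_derive u x (u' x)) ->
  (forall x, a <= x <= b -> is_derive v x (v' x)) ->
  (forall x, a <= x <= b -> Rabs (u' x) <= v' x) ->
  Rabs (u b - u a) <= v b - v a.
Proof.
  intros Hab Hu Hv Hle.
  apply Rabs_le; split.
  - assert (H := cmp_deriv (fun x => - u x) (fun x => - u' x) v v' a b Hab).
    assert (- (v b - v a) <= - ((- u b) - (- u a))); [|lra].
    apply Ropp_le_contravar. apply H; auto.
    + intros x Hx. apply is_derive_Ropp. auto.
    + intros x Hx. specialize (Hle x Hx). apply Rabs_le_between in Hle. lra.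
  - apply (cmp_deriv u u' v v'); auto. intros x Hx. specialize (Hle x Hx).
    apply Rabs_le_between in Hle. lra.
Qed.
Lemma poly_d (P P' : R -> R) x : is_derive P x (P' x) -> is_derive P x (P' x). Proof. auto. Qed.

Lemma taylor4 (g0 g1 g2 g3 g4 : R -> R) (a b M : R) :
  a <= b ->
  (forall x, a <= x <= b -> is_derive g0 x (g1 x)) ->
  (forall x, a <= x <= b -> is_derive g1 x (g2 x)) ->
  (forall x, a <= x <= b -> is_derive g2 x (g3 x)) ->
  (forall x, a <= x <= b -> is_derive g3 x (g4 x)) ->
  (forall x, a <= x <= b -> Rabs (g4 x) <= M) ->
  forall x, a <= x <= b ->
  Rabs (g3 x - g3 a) <= M * (x - a) /\
  Rabs (g2 x - g2 a - g3 a * (x - a)) <= M * (x - a)^2/2 /\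
  Rabs (g1 x - g1 a - g2 a * (x - a) - g3 a * (x - a)^2/2) <= M * (x - a)^3/6 /\
  Rabs (g0 x - g0 a - g1 a * (x - a) - g2 a * (x - a)^2/2 - g3 a * (x-a)^3/6)
     <= M * (x - a)^4/24.
Proof.
  intros Hab H0 H1 H2 H3 HM.
  assert (B3 : forall x, a <= x <= b -> Rabs (g3 x - g3 a) <= M * (x - a)).
  { intros x Hx.
    assert (H := cmp_abs g3 g4 (fun y => M * (y - a)) (fun _ => M) a x ltac:(lra)).
    replace (M * (x - a)) with (M * (x - a) - M * (a - a)) by ring.
    apply H.
    - intros y Hy; apply H3; lra.
    - intros y Hy. auto_derive; [exact I|field].
    - intros y Hy; apply HM; lra. }
  assert (B2 : forall x, a <= x <= b -> Rabs (g2 x - g2 a - g3 a * (x - a)) <= M * (x - a)^2/2).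
  { intros x Hx.
    assert (H := cmp_abs (fun y => g2 y - g3 a * y) (fun y => g3 y - g3 a)
       (fun y => M * (y - a)^2/2) (fun y => M * (y - a)) a x ltac:(lra)).
    replace (g2 x - g2 a - g3 a * (x - a)) with ((g2 x - g3 a * x) - (g2 a - g3 a * a)) by ring.
    replace (M * (x - a)^2/2) with (M * (x - a)^2/2 - M * (a - a)^2/2) by field.
    apply H.
    - intros y Hy. apply is_derive_Rminus. apply H2; lra.
      auto_derive; [exact I|field].
    - intros y Hy. auto_derive; [exact I|field].
    - intros y Hy; apply B3; lra. }
  assert (B1 : forall x, a <= x <= b -> Rabs (g1 x - g1 a - g2 a * (x - a) - g3 a * (x - a)^2/2) <= M * (x - a)^3/6).
  { intros x Hx.
    assert (H := cmp_abs (fun y => g1 y - (g2 a * y + g3 a * (y - a)^2/2))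
       (fun y => g2 y - g2 a - g3 a * (y - a))
       (fun y => M * (y - a)^3/6) (fun y => M * (y - a)^2/2) a x ltac:(lra)).
    replace (g1 x - g1 a - g2 a * (x - a) - g3 a * (x - a)^2/2) with
      ((g1 x - (g2 a * x + g3 a * (x - a)^2/2)) - (g1 a - (g2 a * a + g3 a * (a - a)^2/2))) by field.
    replace (M * (x - a)^3/6) with (M * (x - a)^3/6 - M * (a - a)^3/6) by field.
    apply H.
    - intros y Hy.
      replace (g2 y - g2 a - g3 a * (y - a)) with (g2 y - (g2 a + g3 a * (y - a))) by ring.
      apply is_derive_Rminus. apply H1; lra.
      auto_derive; [exact I|field].
    - intros y Hy. auto_derive; [exact I|field].
    - intros y Hy; apply B2; lra. }
  intros x Hx. split; [apply B3; auto|]. split; [apply B2; auto|]. split; [apply B1; auto|].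
  assert (H := cmp_abs (fun y => g0 y - (g1 a * y + g2 a * (y - a)^2/2 + g3 a * (y - a)^3/6))
       (fun y => g1 y - g1 a - g2 a * (y - a) - g3 a * (y - a)^2/2)
       (fun y => M * (y - a)^4/24) (fun y => M * (y - a)^3/6) a x ltac:(lra)).
  replace (g0 x - g0 a - g1 a * (x - a) - g2 a * (x - a)^2/2 - g3 a * (x-a)^3/6) with
      ((g0 x - (g1 a * x + g2 a * (x - a)^2/2 + g3 a * (x - a)^3/6)) -
       (g0 a - (g1 a * a + g2 a * (a - a)^2/2 + g3 a * (a - a)^3/6))) by field.
  replace (M * (x - a)^4/24) with (M * (x - a)^4/24 - M * (a - a)^4/24) by field.
  apply H.
  - intros y Hy.
    replace (g1 y - g1 a - g2 a * (y - a) - g3 a * (y - a)^2/2) with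
      (g1 y - (g1 a + g2 a * (y - a) + g3 a * (y - a)^2/2)) by ring.
    apply is_derive_Rminus. apply H0; lra.
    auto_derive; [exact I|field].
  - intros y Hy. auto_derive; [exact I|field].
  - intros y Hy; apply B1; lra.
Qed.
Definition F0 (a0 : R -> R) x := / a0 x.
Definition F1 (a0 a1 : R -> R) x := - a1 x / a0 x ^ 2.
Definition F2 (a0 a1 a2 : R -> R) x := - a2 x / a0 x ^ 2 + 2 * a1 x ^ 2 / a0 x ^ 3.
Definition F3 (a0 a1 a2 a3 : R -> R) x :=
  - a3 x / a0 x ^ 2 + 6 * a1 x * a2 x / a0 x ^ 3 - 6 * a1 x ^ 3 / a0 x ^ 4.
Definition F4 (a0 a1 a2 a3 a4 : R -> R) x :=
  - a4 x / a0 x ^ 2 + 8 * a1 x * a3 x / a0 x ^ 3 + 6 * a2 x ^ 2 / a0 x ^ 3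
  - 36 * a1 x ^ 2 * a2 x / a0 x ^ 4 + 24 * a1 x ^ 4 / a0 x ^ 5.

Ltac solve_ex := repeat split; try (eexists; eassumption); try assumption; try exact I.

Lemma F_chain (a0 a1 a2 a3 a4 : R -> R) x :
  is_derive a0 x (a1 x) -> is_derive a1 x (a2 x) -> is_derive a2 x (a3 x) ->
  is_derive a3 x (a4 x) -> a0 x <> 0 ->
  is_derive (F0 a0) x (F1 a0 a1 x) /\
  is_derive (F1 a0 a1) x (F2 a0 a1 a2 x) /\
  is_derive (F2 a0 a1 a2) x (F3 a0 a1 a2 a3 x) /\
  is_derive (F3 a0 a1 a2 a3) x (F4 a0 a1 a2 a3 a4 x).
Proof.
  intros H0 H1 H2 H3 Hn.
  assert (E0 : Derive (fun y => a0 y) x = a1 x) by (apply is_derive_unique; auto).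
  assert (E1 : Derive (fun y => a1 y) x = a2 x) by (apply is_derive_unique; auto).
  assert (E2 : Derive (fun y => a2 y) x = a3 x) by (apply is_derive_unique; auto).
  assert (E3 : Derive (fun y => a3 y) x = a4 x) by (apply is_derive_unique; auto).
  unfold F0, F1, F2, F3, F4.
  split; [|split; [|split]]; auto_derive.
  all: try (rewrite ?E0, ?E1, ?E2, ?E3; field; auto; fail).
  all: solve_ex.
  all: try (repeat apply Rmult_integral_contrapositive_currified; auto; lra).
Qed.
Definition N0 x := exp x - 1.
Definition N1 x := exp x * (x - 1) + 1.
Definition N2 x := exp x * (x^2 - 2*x + 2) - 2.
Definition N3 x := exp x * (x^3 - 3*x^2 + 6*x - 6) + 6.
Definition N4 x := exp x * (x^4 - 4*x^3 + 12*x^2 - 24*x + 24) - 24.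
Definition A0 x := N0 x / x.
Definition A1 x := N1 x / x^2.
Definition A2 x := N2 x / x^3.
Definition A3 x := N3 x / x^4.
Definition A4 x := N4 x / x^5.

Lemma dA0 x : 0 < x -> is_derive A0 x (A1 x).
Proof. intros Hx. unfold A0, A1, N0, N1. auto_derive; [repeat split; repeat apply Rmult_integral_contrapositive_currified; lra | field; lra]. Qed.
Lemma dA1 x : 0 < x -> is_derive A1 x (A2 x).
Proof. intros Hx. unfold A1, A2, N1, N2. auto_derive; [repeat split; repeat apply Rmult_integral_contrapositive_currified; lra | field; lra]. Qed.
Lemma dA2 x : 0 < x -> is_derive A2 x (A3 x).
Proof. intros Hx. unfold A2, A3, N2, N3. auto_derive; [repeat split; repeat apply Rmult_integral_contrapositive_currified; lra | field; lra]. Qed.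
Lemma dA3 x : 0 < x -> is_derive A3 x (A4 x).
Proof. intros Hx. unfold A3, A4, N3, N4. auto_derive; [repeat split; repeat apply Rmult_integral_contrapositive_currified; lra | field; lra]. Qed.

Lemma nonneg_from_deriv (v v' : R -> R) x :
  0 <= x -> v 0 = 0 ->
  (forall y, 0 <= y <= x -> is_derive v y (v' y)) ->
  (forall y, 0 <= y <= x -> 0 <= v' y) -> 0 <= v x.
Proof.
  intros Hx H0 Hd Hp.
  assert (H := cmp_deriv (fun _ => 0) (fun _ => 0) v v' 0 x Hx).
  assert (0 - 0 <= v x - v 0); [|lra].
  apply H; auto. intros y Hy. auto_derive; [exact I|ring].
Qed.

Lemma N0_nn x : 0 <= x -> 0 <= N0 x.
Proof. intros Hx. apply (nonneg_from_deriv N0 (fun y => y^0 * exp y)); auto.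
  unfold N0; rewrite exp_0; ring. intros y Hy; unfold N0; auto_derive; [exact I|ring].
  intros; simpl; rewrite Rmult_1_l; apply Rlt_le, exp_pos. Qed.
Lemma N1_nn x : 0 <= x -> 0 <= N1 x.
Proof. intros Hx. apply (nonneg_from_deriv N1 (fun y => y^1 * exp y)); auto.
  unfold N1; rewrite exp_0; ring. intros y Hy; unfold N1; auto_derive; [exact I|ring].
  intros y Hy; apply Rmult_le_pos; [apply pow_le; lra|apply Rlt_le, exp_pos]. Qed.
Lemma N2_nn x : 0 <= x -> 0 <= N2 x.
Proof. intros Hx. apply (nonneg_from_deriv N2 (fun y => y^2 * exp y)); auto.
  unfold N2; rewrite exp_0; ring. intros y Hy; unfold N2; auto_derive; [exact I|ring].
  intros y Hy; apply Rmult_le_pos; [apply pow_le; lra|apply Rlt_le, exp_pos]. Qed.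
Lemma N3_nn x : 0 <= x -> 0 <= N3 x.
Proof. intros Hx. apply (nonneg_from_deriv N3 (fun y => y^3 * exp y)); auto.
  unfold N3; rewrite exp_0; ring. intros y Hy; unfold N3; auto_derive; [exact I|ring].
  intros y Hy; apply Rmult_le_pos; [apply pow_le; lra|apply Rlt_le, exp_pos]. Qed.
Lemma N4_nn x : 0 <= x -> 0 <= N4 x.
Proof. intros Hx. apply (nonneg_from_deriv N4 (fun y => y^4 * exp y)); auto.
  unfold N4; rewrite exp_0; ring. intros y Hy; unfold N4; auto_derive; [exact I|ring].
  intros y Hy; apply Rmult_le_pos; [apply pow_le; lra|apply Rlt_le, exp_pos]. Qed.

Lemma W0_nn x : 0 <= x -> N1 x <= x * N0 x.
Proof. intros Hx. assert (0 <= x * N0 x - N1 x); [|lra].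
  apply (nonneg_from_deriv (fun y => y * N0 y - N1 y) N0); auto.
  unfold N0, N1; rewrite exp_0; ring. intros y Hy; unfold N0, N1; auto_derive; [exact I|ring].
  intros y Hy; apply N0_nn; lra. Qed.
Lemma W1_nn x : 0 <= x -> N2 x <= x * N1 x.
Proof. intros Hx. assert (0 <= x * N1 x - N2 x); [|lra].
  apply (nonneg_from_deriv (fun y => y * N1 y - N2 y) N1); auto.
  unfold N1, N2; rewrite exp_0; ring. intros y Hy; unfold N1, N2; auto_derive; [exact I|ring].
  intros y Hy; apply N1_nn; lra. Qed.
Lemma W2_nn x : 0 <= x -> N3 x <= x * N2 x.
Proof. intros Hx. assert (0 <= x * N2 x - N3 x); [|lra].
  apply (nonneg_from_deriv (fun y => y * N2 y - N3 y) N2); auto.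
  unfold N2, N3; rewrite exp_0; ring. intros y Hy; unfold N2, N3; auto_derive; [exact I|ring].
  intros y Hy; apply N2_nn; lra. Qed.
Lemma W3_nn x : 0 <= x -> N4 x <= x * N3 x.
Proof. intros Hx. assert (0 <= x * N3 x - N4 x); [|lra].
  apply (nonneg_from_deriv (fun y => y * N3 y - N4 y) N3); auto.
  unfold N3, N4; rewrite exp_0; ring. intros y Hy; unfold N3, N4; auto_derive; [exact I|ring].
  intros y Hy; apply N3_nn; lra. Qed.

Lemma A0_pos x : 0 < x -> 0 < A0 x.
Proof. intros Hx. unfold A0, N0. apply Rdiv_lt_0_compat; auto.
  assert (H := exp_ineq1 x ltac:(lra)). lra. Qed.

Lemma A_chain x : 0 < x ->
  0 <= A4 x <= A3 x /\ A3 x <= A2 x /\ A2 x <= A1 x /\ A1 x <= A0 x.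
Proof.
  intros Hx. assert (Hx' : 0 <= x) by lra.
  assert (W0 := W0_nn x Hx'). assert (W1 := W1_nn x Hx').
  assert (W2 := W2_nn x Hx'). assert (W3 := W3_nn x Hx').
  assert (P4 := N4_nn x Hx').
  unfold A0, A1, A2, A3, A4.
  repeat split.
  - apply Rdiv_le_0_compat; auto. apply pow_lt; auto.
  - apply Rmult_le_reg_r with (x ^ 5). apply pow_lt; auto.
    replace (N3 x / x ^ 4 * x ^ 5) with (x * N3 x) by (field; lra).
    replace (N4 x / x ^ 5 * x ^ 5) with (N4 x) by (field; lra). auto.
  - apply Rmult_le_reg_r with (x ^ 4). apply pow_lt; auto.
    replace (N2 x / x ^ 3 * x ^ 4) with (x * N2 x) by (field; lra).
    replace (N3 x / x ^ 4 * x ^ 4) with (N3 x) by (field; lra). auto.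
  - apply Rmult_le_reg_r with (x ^ 3). apply pow_lt; auto.
    replace (N1 x / x ^ 2 * x ^ 3) with (x * N1 x) by (field; lra).
    replace (N2 x / x ^ 3 * x ^ 3) with (N2 x) by (field; lra). auto.
  - apply Rmult_le_reg_r with (x ^ 2). apply pow_lt; auto.
    replace (N0 x / x * x ^ 2) with (x * N0 x) by (field; lra).
    replace (N1 x / x ^ 2 * x ^ 2) with (N1 x) by (field; lra). auto.
Qed.

Definition ph0 := F0 A0.
Definition ph1 := F1 A0 A1.
Definition ph2 := F2 A0 A1 A2.
Definition ph3 := F3 A0 A1 A2 A3.
Definition ph4 := F4 A0 A1 A2 A3 A4.

Lemma ph_derivs x : 0 < x ->
  is_derive ph0 x (ph1 x) /\ is_derive ph1 x (ph2 x) /\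
  is_derive ph2 x (ph3 x) /\ is_derive ph3 x (ph4 x).
Proof.
  intros Hx. apply F_chain.
  apply dA0; auto. apply dA1; auto. apply dA2; auto. apply dA3; auto.
  apply Rgt_not_eq, A0_pos; auto.
Qed.

Lemma ph_bounds x : 0 < x ->
  Rabs (ph1 x) <= ph0 x /\ Rabs (ph2 x) <= 3 * ph0 x /\ Rabs (ph4 x) <= 40 * ph0 x.
Proof.
  intros Hx. assert (Hp := A0_pos x Hx). destruct (A_chain x Hx) as [[H4 H43] [H32 [H21 H10]]].
  set (r1 := A1 x / A0 x). set (r2 := A2 x / A0 x). set (r3 := A3 x / A0 x). set (r4 := A4 x / A0 x).
  assert (R4 : 0 <= r4 <= r3) by (unfold r4, r3; split; [apply Rdiv_le_0_compat|apply Rmult_le_compat_r]; auto; apply Rlt_le, Rinv_0_lt_compat; auto).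
  assert (R3 : r3 <= r2) by (unfold r3, r2; apply Rmult_le_compat_r; auto; apply Rlt_le, Rinv_0_lt_compat; auto).
  assert (R2 : r2 <= r1) by (unfold r2, r1; apply Rmult_le_compat_r; auto; apply Rlt_le, Rinv_0_lt_compat; auto).
  assert (R1 : r1 <= 1) by (unfold r1; apply Rmult_le_reg_r with (A0 x); auto; field_simplify; lra).
  assert (E0 : ph0 x = / A0 x) by reflexivity.
  assert (E1 : ph1 x = (- r1) * / A0 x) by (unfold ph1, F1, r1; field; lra).
  assert (E2 : ph2 x = (- r2 + 2 * r1^2) * / A0 x) by (unfold ph2, F2, r1, r2; field; lra).
  assert (E4 : ph4 x = (- r4 + 8 * r1 * r3 + 6 * r2 ^ 2 - 36 * r1 ^ 2 * r2 + 24 * r1 ^ 4) * / A0 x)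
    by (unfold ph4, F4, r1, r2, r3, r4; field; lra).
  assert (Hi : 0 < / A0 x) by (apply Rinv_0_lt_compat; auto).
  rewrite E0, E1, E2, E4.
  assert (0 <= r1 * r3 <= 1) by (split; nra).
  assert (0 <= r2 ^ 2 <= 1) by (split; nra).
  assert (0 <= r1 ^ 2 <= 1) by (split; nra).
  assert (0 <= r1 ^ 2 * r2 <= 1) by (split; nra).
  assert (0 <= r1 ^ 4 <= 1) by (replace (r1^4) with ((r1^2)*(r1^2)) by ring; split; nra).
  repeat split; rewrite Rabs_mult, (Rabs_right (/ A0 x)) by lra.
  - rewrite <- (Rmult_1_l (/ A0 x)) at 2.
    apply Rmult_le_compat_r; try lra; apply Rabs_le; split; nra.
  - apply Rmult_le_compat_r; try lra; apply Rabs_le; split; nra.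
  - apply Rmult_le_compat_r; try lra; apply Rabs_le; split; nra.
Qed.

Lemma ph0_pos x : 0 < x -> 0 < ph0 x.
Proof. intros Hx. unfold ph0, F0. apply Rinv_0_lt_compat, A0_pos; auto. Qed.

Lemma ph0_eq x : 0 < x -> ph0 x = x / (exp x - 1).
Proof. intros Hx. unfold ph0, F0, A0, N0.
  assert (H := exp_ineq1 x ltac:(lra)). field. lra. Qed.

Lemma ph0_decr a x : 0 < a -> a <= x -> ph0 x <= ph0 a.
Proof.
  intros Ha Hax.
  assert (H := cmp_deriv (fun _ => 0) (fun _ => 0) A0 A1 a x Hax).
  assert (0 - 0 <= A0 x - A0 a).
  { apply H. intros; auto_derive; [exact I|ring]. intros; apply dA0; lra.
    intros y Hy. destruct (A_chain y ltac:(lra)) as [[H4 H43] [H32 [H21 H10]]]. lra. }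
  unfold ph0, F0. apply Rinv_le_contravar. apply A0_pos; auto. lra.
Qed.

Lemma ph0_exp x : 0 < x -> ph0 x <= exp (- (x / 2)).
Proof.
  intros Hx. rewrite ph0_eq by auto.
  assert (Hv : 0 <= exp x - 1 - x * exp (x / 2)).
  { apply (nonneg_from_deriv (fun y => exp y - 1 - y * exp (y/2))
       (fun y => exp (y/2) * (exp (y/2) - 1 - y/2))); [lra| |idtac|idtac].
    - rewrite Rmult_0_l, exp_0. ring.
    - intros y Hy. auto_derive; [exact I|].
      replace (exp y) with (exp (y/2) * exp (y/2)) by (rewrite <- exp_plus; f_equal; field). unfold Rdiv. ring.
    - intros y Hy. apply Rmult_le_pos. apply Rlt_le, exp_pos.
      assert (H := exp_ineq1_le (y/2)). lra. }
  assert (He : 1 + x < exp x) by (apply exp_ineq1; lra).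
  apply Rmult_le_reg_r with (exp x - 1). lra.
  replace (x / (exp x - 1) * (exp x - 1)) with x by (field; lra).
  assert (Hm : exp (- (x/2)) * exp (x / 2) = 1) by (rewrite <- exp_plus; replace (- (x/2) + x/2) with 0 by ring; apply exp_0).
  assert (H2 := exp_pos (x/2)). assert (H3 := exp_pos (- (x/2))). nra.
Qed.

Lemma term_bound a t : 0 < a -> 0 < t ->
  Rabs (t * ph1 a - (ph0 (a + t) - ph0 a) + (t/2) * (ph1 (a + t) - ph1 a)
        - (t^2/12) * (ph2 (a + t) - ph2 a)) <= 7 * ph0 a * t^4.
Proof.
  intros Ha Ht.
  destruct (taylor4 ph0 ph1 ph2 ph3 ph4 a (a + t) (40 * ph0 a)) with (x := a + t)
    as [B3 [B2 [B1 B0]]]; try lra.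
  - intros x Hx; apply ph_derivs; lra.
  - intros x Hx; apply ph_derivs; lra.
  - intros x Hx; apply ph_derivs; lra.
  - intros x Hx; apply ph_derivs; lra.
  - intros x Hx. destruct (ph_bounds x ltac:(lra)) as [_ [_ H]].
    assert (ph0 x <= ph0 a) by (apply ph0_decr; lra). lra.
  - replace (a + t - a) with t in * by ring.
    set (R0 := ph0 (a + t) - ph0 a - ph1 a * t - ph2 a * t ^ 2 / 2 - ph3 a * t ^ 3 / 6) in *.
    set (R1 := ph1 (a + t) - ph1 a - ph2 a * t - ph3 a * t ^ 2 / 2) in *.
    set (R2 := ph2 (a + t) - ph2 a - ph3 a * t) in *.
    replace (t * ph1 a - (ph0 (a + t) - ph0 a) + t / 2 * (ph1 (a + t) - ph1 a) -
       t ^ 2 / 12 * (ph2 (a + t) - ph2 a)) with (- R0 + (t/2) * R1 - (t^2/12) * R2)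
       by (unfold R0, R1, R2; field).
    assert (Hp := ph0_pos a Ha).
    apply Rabs_le_between in B0. apply Rabs_le_between in B1. apply Rabs_le_between in B2.
    assert (Ht2 : 0 < t^2) by (apply pow_lt; auto).
    apply Rabs_le. split; nra.
Qed.

Lemma exp_INR_mult n c : exp (INR n * c) = exp c ^ n.
Proof.
  induction n. simpl. rewrite Rmult_0_l; apply exp_0.
  rewrite S_INR, Rmult_plus_distr_r, Rmult_1_l, exp_plus, IHn. simpl. ring.
Qed.

Lemma is_series_of_lim (a : nat -> R) (l : R) : is_lim_seq (sum_n a) l -> is_series a l.
Proof. intros H. exact H. Qed.

Lemma telescope (D : nat -> R) : is_lim_seq D 0 ->
  is_series (fun n => D n - D (S n)) (D O).
Proof.
  intros H. apply is_series_of_lim.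
  apply is_lim_seq_ext with (fun n => D O - D (S n)).
  - intros n. induction n.
    + rewrite sum_O. reflexivity.
    + rewrite sum_Sn, <- IHn. unfold plus; simpl. ring.
  - assert (Hi : is_lim_seq (fun n => D (S n)) 0) by (apply (is_lim_seq_incr_1 D 0); exact H).
    assert (H' := is_lim_seq_minus' _ _ (D O) 0 (is_lim_seq_const (D O)) Hi).
    rewrite Rminus_0_r in H'. exact H'.
Qed.


Definition xs (t : R) (n : nat) := INR (S n) * t.
Definition rr (t : R) := exp (- (t / 2)).

Lemma xs_pos (t : R) (Ht : 0 < t) n : 0 < (xs t) n.
Proof. unfold xs. apply Rmult_lt_0_compat; auto. apply lt_0_INR; lia. Qed.

Lemma xs_S (t : R) (Ht : 0 < t) n : (xs t) (S n) = (xs t) n + t.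
Proof. unfold xs. rewrite (S_INR (S n)). ring. Qed.

Lemma xs_ge (t : R) (Ht : 0 < t) n : t <= (xs t) n.
Proof. unfold xs. rewrite <- (Rmult_1_l t) at 1. apply Rmult_le_compat_r; [lra|].
  rewrite S_INR. assert (H := pos_INR n). lra. Qed.

Lemma rr_pos (t : R) : 0 < (rr t). Proof. apply exp_pos. Qed.
Lemma rr_lt1 (t : R) (Ht : 0 < t) : (rr t) < 1.
Proof. unfold rr. rewrite <- exp_0. apply exp_increasing. lra. Qed.

Lemma ph0_xs (t : R) (Ht : 0 < t) n : ph0 ((xs t) n) <= (rr t) ^ (S n).
Proof.
  eapply Rle_trans. apply ph0_exp, (xs_pos t Ht).
  unfold rr. rewrite <- exp_INR_mult. unfold xs. right; f_equal. field.
Qed.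

Lemma geom_S (t : R) (Ht : 0 < t) c : is_series (fun n => c * (rr t) ^ (S n)) (c * (rr t) / (1 - (rr t))).
Proof.
  assert (H := is_series_geom (rr t)).
  assert (Hr : Rabs (rr t) < 1) by (rewrite Rabs_right; [apply (rr_lt1 t Ht)| apply Rle_ge, Rlt_le, (rr_pos t)]).
  specialize (H Hr).
  apply (is_series_scal (c * (rr t))) in H.
  eapply is_series_ext; [|replace (c * (rr t) / (1 - (rr t))) with (scal (c * (rr t)) (/ (1 - (rr t)))); [exact H|]].
  - intros n. unfold scal; simpl. unfold mult; simpl. ring.
  - unfold scal; simpl. unfold mult; simpl. field. assert (H1 := (rr_lt1 t Ht)). lra.
Qed.

Definition Dn (t : R) (n : nat) := ph0 ((xs t) n) - (t/2) * ph1 ((xs t) n) + (t^2/12) * ph2 ((xs t) n).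
Definition termn (t : R) (n : nat) := t * ph1 ((xs t) n) - (ph0 ((xs t) (S n)) - ph0 ((xs t) n))
   + (t/2) * (ph1 ((xs t) (S n)) - ph1 ((xs t) n)) - (t^2/12) * (ph2 ((xs t) (S n)) - ph2 ((xs t) n)).

Lemma Dn_lim (t : R) (Ht : 0 < t) : is_lim_seq (Dn t) 0.
Proof.
  set (c := 1 + t/2 + t^2/12 * 3).
  apply is_lim_seq_le_le with (fun n => - (c * (rr t)) * (rr t) ^ n) (fun n => (c * (rr t)) * (rr t) ^ n).
  - intros n. destruct (ph_bounds ((xs t) n) ((xs_pos t Ht) n)) as [B1 [B2 _]].
    assert (H0 := (ph0_xs t Ht) n). assert (Hp := ph0_pos ((xs t) n) ((xs_pos t Ht) n)).
    apply Rabs_le_between in B1. apply Rabs_le_between in B2.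
    assert (Ht2 : 0 < t^2) by (apply pow_lt; auto).
    replace (c * (rr t) * (rr t) ^ n) with (c * (rr t) ^ (S n)) by (simpl; ring).
    replace (- (c * (rr t)) * (rr t) ^ n) with (- (c * (rr t) ^ (S n))) by (simpl; ring).
    unfold Dn, c. split; nra.
  - replace (Finite 0) with (Rbar_mult (- (c * (rr t))) 0) by (simpl; f_equal; ring).
    apply is_lim_seq_scal_l, is_lim_seq_geom.
    rewrite Rabs_right; [apply (rr_lt1 t Ht)| apply Rle_ge, Rlt_le, (rr_pos t)].
  - replace (Finite 0) with (Rbar_mult (c * (rr t)) 0) by (simpl; f_equal; ring).
    apply is_lim_seq_scal_l, is_lim_seq_geom.
    rewrite Rabs_right; [apply (rr_lt1 t Ht)| apply Rle_ge, Rlt_le, (rr_pos t)].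
Qed.

Lemma termn_bound (t : R) (Ht : 0 < t) n : Rabs ((termn t) n) <= 7 * t^4 * (rr t) ^ (S n).
Proof.
  unfold termn. rewrite (xs_S t Ht).
  eapply Rle_trans. apply term_bound. apply (xs_pos t Ht). auto.
  assert (H := (ph0_xs t Ht) n). assert (Ht4 : 0 < t^4) by (apply pow_lt; auto). nra.
Qed.

Lemma termn_ex (t : R) (Ht : 0 < t) : ex_series (termn t).
Proof.
  apply (ex_series_le (termn t) (fun n => 7 * t^4 * (rr t) ^ (S n))).
  - intros n. apply (termn_bound t Ht).
  - eexists. apply (geom_S t Ht).
Qed.

Lemma termn_Series (t : R) (Ht : 0 < t) : Rabs (Series (termn t)) <= 7 * t^4 * (rr t) / (1 - (rr t)).
Proof.
  eapply Rle_trans. apply Series_Rabs.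
  apply (@ex_series_le R_AbsRing R_CompleteNormedModule (fun n => Rabs ((termn t) n)) (fun n => 7 * t^4 * (rr t) ^ (S n))).
  - intros n. change (norm (Rabs ((termn t) n))) with (Rabs (Rabs ((termn t) n))).
    rewrite Rabs_Rabsolu. apply (termn_bound t Ht).
  - eexists. apply (geom_S t Ht).
  - rewrite <- (is_series_unique _ _ ((geom_S t Ht) (7 * t^4))).
    apply Series_le. intros n; split; [apply Rabs_pos|apply (termn_bound t Ht)].
    eexists; apply (geom_S t Ht).
Qed.

Definition an (t : R) (n : nat) := - t * ph1 ((xs t) n).

Lemma an_series (t : R) (Ht : 0 < t) : is_series (an t) ((Dn t) O - Series (termn t)).
Proof.
  assert (H1 := telescope (Dn t) (Dn_lim t Ht)).
  destruct (termn_ex t Ht) as [l Hl].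
  rewrite (is_series_unique _ _ Hl).
  assert (H := is_series_minus _ _ _ _ H1 Hl).
  eapply is_series_ext; [|exact H].
  intros n. unfold plus, opp; simpl. unfold an, Dn, termn. ring.
Qed.



Lemma G_identity t : 0 < t ->
  let E := exp t in let u := t / (E - 1) in
  (E - 1) / t^2 * Dn t O + / t - (E + 1) / (E - 1) =
  (18 - 8*t - 20*u + t^2 + 3*u*t + 2*u^2) / (12 * t).
Proof.
  intros Ht E u.
  assert (HE : 1 + t < E) by (apply exp_ineq1; lra).
  unfold u, Dn, xs, ph0, ph1, ph2, F0, F1, F2, A0, A1, A2, N0, N1, N2.
  replace (INR 1 * t) with t by (simpl; ring). fold E.
  field. split; lra.
Qed.

Lemma c2_formula q : 0 < q < 1 ->
  let t := ln (/ q) in let E := exp t in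
  c2 q = (E - 1) / t^2 * (Dn t O - Series (termn t)) + / t - (E + 1) / (E - 1).
Proof.
  intros [Hq0 Hq1] t E.
  assert (HQ : 1 < / q) by (rewrite <- Rinv_1; apply Rinv_lt_contravar; lra).
  assert (Ht : 0 < t) by (unfold t; rewrite <- ln_1; apply ln_increasing; lra).
  assert (HEQ : E = / q) by (unfold E, t; apply exp_ln; lra).
  assert (HE : 1 + t < E) by (apply exp_ineq1; lra).
  assert (Hpow : forall n, (/ q) ^ (S n) = exp (xs t n)).
  { intros n. rewrite <- Rpower_pow by lra. unfold Rpower, xs. fold t. reflexivity. }
  set (b1 := fun n : nat => / ((/ q) ^ (S n) - 1)).
  set (b2 := fun n : nat => INR (S n) * (/ q) ^ (S n) / ((/ q) ^ (S n) - 1) ^ 2).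
  assert (Hex : forall n, 1 + xs t n < exp (xs t n)) by (intros; apply exp_ineq1; apply Rgt_not_eq, xs_pos; auto).
  assert (Hab : forall n, an t n = t^2 * b2 n - t * b1 n).
  { intros n. unfold an, b1, b2, ph1, F1, A0, A1, N0, N1. rewrite Hpow.
    assert (Hx := xs_pos t Ht n). specialize (Hex n).
    replace (INR (S n)) with (xs t n / t) by (unfold xs; field; lra).
    field. repeat split; lra. }
  assert (Hb1ex : ex_series b1).
  { apply (@ex_series_le R_AbsRing R_CompleteNormedModule b1 (fun n => / t * rr t ^ (S n))).
    - intros n. change (norm (b1 n)) with (Rabs (b1 n)).
      unfold b1. rewrite Hpow. specialize (Hex n). assert (Hx := xs_pos t Ht n).
      assert (Hg := xs_ge t Ht n). assert (H0 := ph0_xs t Ht n). rewrite ph0_eq in H0 by auto.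
      rewrite Rabs_right by (apply Rle_ge, Rlt_le, Rinv_0_lt_compat; lra).
      assert (Hi : 0 < / (exp (xs t n) - 1)) by (apply Rinv_0_lt_compat; lra).
      replace (xs t n / (exp (xs t n) - 1)) with (xs t n * / (exp (xs t n) - 1)) in H0 by reflexivity.
      apply Rmult_le_reg_l with t; auto. rewrite <- Rmult_assoc, Rinv_r, Rmult_1_l by lra.
      nra.
    - eexists. apply geom_S. auto. }
  destruct Hb1ex as [Sb1 HSb1].
  assert (HSa := an_series t Ht).
  set (Sa := Dn t O - Series (termn t)) in *.
  assert (HSb2 : is_series b2 ((Sa + t * Sb1) / t^2)).
  { assert (H := is_series_plus _ _ _ _ HSa (is_series_scal t _ _ HSb1)).
    apply (is_series_scal (/ t^2)) in H.
    eapply is_series_ext; [|replace ((Sa + t * Sb1) / t ^ 2) with (scal (/ t^2) (plus Sa (scal t Sb1))); [exact H|]].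
    - intros n. unfold scal, plus; simpl. unfold mult; simpl. rewrite Hab. field. lra.
    - unfold scal, plus; simpl. unfold mult; simpl. field. lra. }
  unfold c2. fold t.
  change (Series (fun n : nat => / ((/ q) ^ S n - 1))) with (Series b1).
  change (Series (fun n : nat => INR (S n) * (/ q) ^ S n / ((/ q) ^ S n - 1) ^ 2)) with (Series b2).
  rewrite (is_series_unique _ _ HSb1), (is_series_unique _ _ HSb2).
  replace q with (/ E) by (rewrite HEQ; field; lra).
  field. repeat split; try lra. 
Qed.

Lemma exp_bounds t : 0 < t <= 1 ->
  1 + t + t^2/2 + t^3/6 <= exp t <= 1 + t + t^2/2 + t^3/6 + t^4/8.
Proof.
  intros Ht. split.
  - assert (H := exp_ge_taylor t 3 ltac:(lra)). simpl in H. lra.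
  - destruct (taylor4 exp exp exp exp exp 0 t 3) with (x := t) as [_ [_ [_ B0]]]; try lra.
    + intros; auto_derive; [exact I|ring].
    + intros; auto_derive; [exact I|ring].
    + intros; auto_derive; [exact I|ring].
    + intros; auto_derive; [exact I|ring].
    + intros x Hx. rewrite Rabs_right by (apply Rle_ge, Rlt_le, exp_pos).
      eapply Rle_trans; [|apply exp_le_3]. destruct (Req_dec x 1) as [->|]; [lra|].
      left; apply exp_increasing; lra.
    + rewrite exp_0, Rminus_0_r in B0. apply Rabs_le_between in B0. lra.
Qed.

Lemma G_bound t : 0 < t <= 1 ->
  let E := exp t in let u := t / (E - 1) in
  Rabs ((18 - 8*t - 20*u + t^2 + 3*u*t + 2*u^2) / (12 * t) - (1/4 - t/9)) <= 2 * t^2.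
Proof.
  intros Ht E u.
  destruct (exp_bounds t Ht) as [Hl Hu]. fold E in Hl, Hu.
  set (y0 := t + t^2/2 + t^3/6).
  set (s := E - 1 - y0).
  assert (Hs : 0 <= s <= t^4/8) by (unfold s, y0; lra).
  assert (Hy : t <= E - 1) by (unfold y0 in *; nra).
  set (P := (E-1)^2 * (18 - 11*t + 7*t^2/3) + (E-1) * (3*t^2 - 20*t) + 2*t^2).
  assert (HG : (18 - 8*t - 20*u + t^2 + 3*u*t + 2*u^2) / (12 * t) - (1/4 - t/9)
      = P / (12 * t * (E-1)^2)).
  { unfold P, u. field. lra. }
  set (K := (2*y0 + s) * (18 - 11*t + 7*t^2/3) + 3*t^2 - 20*t).
  assert (HP : P = - 7/12 * t^5 + t^6/36 + t^7/12 + 7 * t^8/108 + s * K).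
  { unfold P, K. replace (E - 1) with (y0 + s) by (unfold s; ring). unfold y0. field. }
  assert (Ht5 : 0 < t^5) by (apply pow_lt; lra).
  assert (H6 : t^6 <= t^5) by (replace (t^6) with (t^5 * t) by ring; nra).
  assert (H7 : t^7 <= t^5) by (replace (t^7) with (t^5 * (t*t)) by ring; nra).
  assert (H8 : t^8 <= t^5) by (replace (t^8) with (t^5 * (t*t*t)) by ring;
     assert (t*t*t <= 1) by nra; nra).
  assert (Hy0 : 0 <= 2 * y0 + s <= 4 * t).
  { unfold y0. split; [nra|]. assert (t^2 <= t) by nra. assert (t^3 <= t) by nra.
    assert (t^4 <= t) by (replace (t^4) with (t*(t*t*t)) by ring; assert (t*t*t <= 1) by nra; nra). lra. }
  assert (Hc : 0 <= 18 - 11*t + 7*t^2/3 <= 21) by (split; nra).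
  assert (HK : Rabs K <= 85 * t).
  { unfold K. apply Rabs_le. split; nra. }
  assert (HsK : Rabs (s * K) <= 11 * t^5).
  { rewrite Rabs_mult, Rabs_right by lra.
    replace (t^5) with (t^4 * t) by ring.
    assert (Ht4 : 0 < t^4) by (apply pow_lt; lra).
    apply Rle_trans with (t^4/8 * (85 * t)). apply Rmult_le_compat; try lra. apply Rabs_pos. nra. }
  assert (HPb : Rabs P <= 12 * t^5).
  { rewrite HP. apply Rabs_le_between in HsK.
    assert (0 <= t^6) by (apply pow_le; lra). assert (0 <= t^7) by (apply pow_le; lra).
    assert (0 <= t^8) by (apply pow_le; lra).
    apply Rabs_le. split; lra. }
  rewrite HG. unfold Rdiv. rewrite Rabs_mult.
  assert (Hd : 12 * t^3 <= 12 * t * (E-1)^2).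
  { assert (t^2 <= (E-1)^2) by (apply pow_incr; lra).
    replace (t^3) with (t * t^2) by ring. nra. }
  assert (Ht3 : 0 < t^3) by (apply pow_lt; lra).
  rewrite (Rabs_right (/ (12 * t * (E-1)^2))) by (apply Rle_ge, Rlt_le, Rinv_0_lt_compat; lra).
  apply Rle_trans with (12 * t^5 * / (12 * t^3)).
  - apply Rmult_le_compat; auto. apply Rabs_pos. apply Rlt_le, Rinv_0_lt_compat; lra.
    apply Rinv_le_contravar; lra.
  - replace (12 * t^5 * / (12 * t^3)) with (t^2) by (field; lra).
    assert (0 < t^2) by (apply pow_lt; lra). lra.
Qed.

Lemma main_bound q : 1/2 < q < 1 ->
  Rabs (c2 q - (1/4 + (1/9) * ln q)) <= 30 * (ln q)^2.
Proof.
  intros Hq.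
  assert (Hq' : 0 < q < 1) by lra.
  assert (HF := c2_formula q Hq'). cbv zeta in HF.
  set (t := ln (/ q)) in *. set (E := exp t) in *.
  assert (HQ : 1 < / q) by (rewrite <- Rinv_1; apply Rinv_lt_contravar; lra).
  assert (Ht : 0 < t) by (unfold t; rewrite <- ln_1; apply ln_increasing; lra).
  assert (Hlnq : ln q = - t) by (unfold t; rewrite ln_Rinv by lra; ring).
  assert (Ht1 : t <= 1).
  { assert (H2 : / q < 2) by (replace 2 with (/ (1/2)) by field; apply Rinv_lt_contravar; lra).
    assert (He : 2 < exp 1) by (assert (H := exp_ineq1 1 ltac:(lra)); lra).
    left. unfold t. rewrite <- (ln_exp 1). apply ln_increasing; lra. }
  destruct (exp_bounds t (conj Ht Ht1)) as [Hl Hu]. fold E in Hl, Hu.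
  assert (HG := G_identity t Ht). cbv zeta in HG. fold E in HG.
  assert (HGb := G_bound t (conj Ht Ht1)). cbv zeta in HGb. fold E in HGb.
  assert (HS := termn_Series t Ht).
  assert (Hrr : rr t / (1 - rr t) <= 2 / t).
  { unfold rr. set (w := exp (t/2)).
    assert (Hw : exp (- (t/2)) * w = 1) by (unfold w; rewrite <- exp_plus; replace (- (t/2) + t/2) with 0 by ring; apply exp_0).
    assert (Hw1 : 1 + t/2 < w) by (apply exp_ineq1; lra).
    replace (exp (- (t / 2))) with (/ w) by (field_simplify_eq; [lra| lra]).
    replace (/ w / (1 - / w)) with (/ (w - 1)) by (field; lra).
    apply Rmult_le_reg_l with (w - 1). lra.
    rewrite Rinv_r by lra. apply Rmult_le_reg_l with t; auto.
    replace (t * ((w - 1) * (2 / t))) with (2 * (w - 1)) by (field; lra). lra. }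
  assert (HST : Rabs (Series (termn t)) <= 14 * t^3).
  { eapply Rle_trans; [exact HS|].
    assert (Ht4 : 0 < t^4) by (apply pow_lt; lra).
    unfold Rdiv at 1. rewrite Rmult_assoc.
    apply Rle_trans with (7 * t^4 * (2 / t)).
    apply Rmult_le_compat_l; [lra|]. exact Hrr.
    right. field. lra. }
  rewrite HF, Hlnq.
  assert (Ht2 : 0 < t^2) by (apply pow_lt; lra).
  assert (HE1 : 1 + t < E) by (apply exp_ineq1; lra).
  replace ((E - 1) / t ^ 2 * (Dn t 0 - Series (termn t)) + / t - (E + 1) / (E - 1) -
     (1 / 4 + 1 / 9 * - t)) with
     (((E - 1) / t ^ 2 * Dn t 0 + / t - (E + 1) / (E - 1) - (1/4 - t/9))
      - (E - 1) / t ^ 2 * Series (termn t)) by (field; split; lra).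
  rewrite HG.
  eapply Rle_trans; [apply Rabs_triang|]. rewrite Rabs_Ropp.
  rewrite Rabs_mult. rewrite (Rabs_right ((E - 1) / t ^ 2)).
  2: { apply Rle_ge, Rdiv_le_0_compat; lra. }
  replace ((- t)^2) with (t^2) by ring.
  assert (HE2 : E - 1 <= 2 * t).
  { assert (t^2 <= t) by nra. assert (t^3 <= t) by nra.
    assert (t^4 <= t) by (replace (t^4) with (t*(t*t*t)) by ring; assert (t*t*t <= 1) by nra; nra). lra. }
  apply Rle_trans with (2 * t^2 + (2 * t) / t^2 * (14 * t^3)).
  - apply Rplus_le_compat; [exact HGb|].
    apply Rmult_le_compat; try lra. apply Rdiv_le_0_compat; lra. apply Rabs_pos.
    unfold Rdiv. apply Rmult_le_compat_r; [apply Rlt_le, Rinv_0_lt_compat|]; lra.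
  - right. field. lra.
Qed.

Lemma ln_le_sub1 y : 0 < y -> ln y <= y - 1.
Proof.
  intros Hy. rewrite <- (ln_exp (y - 1)). apply ln_le; auto.
  assert (H := exp_ineq1_le (y - 1)). lra.
Qed.

Theorem mainTheorem8 :
  (exists C delta : R, 0 < C /\ 0 < delta /\
     forall q : R, 1 - delta < q < 1 ->
       Rabs (c2 q - (1/4 + (1/9) * ln q)) <= C * (ln q) ^ 2)
  /\ filterlim c2 (at_left 1) (locally (1/4)).
Proof.
  split.
  - exists 30, (1/2). split; [lra|]. split; [lra|].
    intros q Hq. apply main_bound. lra.
  - apply filterlim_locally. intros eps.
    assert (He := cond_pos eps).
    set (d := Rmin (1/2) (eps / 62)).
    assert (Hd : 0 < d) by (unfold d; apply Rmin_pos; lra).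
    exists (mkposreal d Hd). intros q Hball Hq1.
    assert (Hdq : Rabs (q - 1) < d) by exact Hball.
    assert (Hd1 : d <= 1/2) by (unfold d; apply Rmin_l).
    assert (Hd2 : d <= eps / 62) by (unfold d; apply Rmin_r).
    apply Rabs_lt_between' in Hdq.
    assert (Hq : 1/2 < q < 1) by lra.
    assert (HB := main_bound q Hq).
    set (t := - ln q) in *.
    assert (Ht : 0 < t).
    { unfold t. assert (ln q < 0); [|lra]. rewrite <- ln_1. apply ln_increasing; lra. }
    assert (Htle : t <= 2 * (1 - q)).
    { unfold t. rewrite <- ln_Rinv by lra. eapply Rle_trans. apply ln_le_sub1.
      apply Rinv_0_lt_compat; lra.
      apply Rmult_le_reg_l with q; [lra|].
      replace (q * (/ q - 1)) with (1 - q) by (field; lra). nra. }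
    replace (ln q) with (- t) in HB by (unfold t; ring).
    change (Rabs (c2 q - 1/4) < eps).
    apply Rabs_le_between in HB.
    assert (Ht1 : t <= 1) by lra.
    assert (t^2 <= t) by nra.
    apply Rabs_lt_between. split; nra.
Qed.
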